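(* Let $\ell,\ell'$ be nondegenerate Hermitian forms on complex $n$-dimensional spaces $W,W'$, and let $A:W\to W$, $A':W'\to W'$ be nonsingular antilinear operators that are $\ell$-self-adjoint and $\ell'$-self-adjoint respectively. If the pairs $(\ell,A^2)$ and $(\ell',A'^2)$ are equivalent (i.e. there is a linear isomorphism $\varphi:W\to W'$ with $\ell'(\varphi v,\varphi w)=\ell(v,w)$ and $\varphi A^2=A'^2\varphi$; equivalently they have the same Gohberg--Lancaster--Rodman canonical form), then $(\ell,A)$ and $(\ell',A')$ are equivalent (there is a linear isomorphism $\psi:W\to W'$ with $\ell'(\psi v,\psi w)=\ell(v,w)$ and $\psi A=A'\psi$). In other words, for nonsingular $A$ the canonical form of $(\ell,A)$ given by the simultaneous canonical form theorem is determined by the canonical form of the pair $(\ell,A^2)$.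
   Context: An antilinear operator satisfies $A(zv+w)=\bar z Av+Aw$. Hermitian forms are linear in the first argument and conjugate-linear in the second. $A$ is $\ell$-self-adjoint if $\ell(Av,w)=\ell(Aw,v)$ for all $v,w$; then $A^2$ is a linear $\ell$-self-adjoint operator (i.e. $\ell(A^2v,w)=\ell(v,A^2w)$). The Gohberg--Lancaster--Rodman canonical form classifies pairs (nondegenerate Hermitian form, self-adjoint linear operator) up to simultaneous change of basis. *)

(* Defs.v *)
(* Complex n-dimensional space W = 'rV[C]_n, with C any
   numClosedFieldType (algebraically closed field with conjugation, e.g. algC). *)
From HB Require Import structures.
From mathcomp Require Import all_boot all_order all_algebra.
Set Implicit Arguments. Unset Strict Implicit. Unset Printing Implicit Defensive.
Import Order.TTheory GRing.Theory Num.Theory.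
Local Open Scope ring_scope.

Section Defs.
Variables (C : numClosedFieldType) (n : nat).
Local Notation W := 'rV[C]_n.

Definition sesq_hermitian (l : W -> W -> C) : Prop :=
  (forall (a : C) (u v w : W), l (a *: u + v) w = a * l u w + l v w) /\
  (forall v w : W, l v w = Num.conj (l w v)).

Definition sesq_nondegenerate (l : W -> W -> C) : Prop :=
  forall v : W, (forall w : W, l v w = 0) -> v = 0.

Definition is_antilinear (A : W -> W) : Prop :=
  forall (z : C) (v w : W), A (z *: v + w) = Num.conj z *: A v + A w.

Definition op_nonsingular (A : W -> W) : Prop :=
  forall v : W, A v = 0 -> v = 0.

Definition l_self_adjoint (l : W -> W -> C) (A : W -> W) : Prop :=
  forall v w : W, l (A v) w = l (A w) v.

Definition pair_equiv (l : W -> W -> C) (B : W -> W)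
    (l' : W -> W -> C) (B' : W -> W) : Prop :=
  exists P : 'M[C]_n, P \in unitmx /\
    (forall v w : W, l' (v *m P) (w *m P) = l v w) /\
    (forall v : W, B v *m P = B' (v *m P)).
End Defs.

(* Main.v *)
Require Import Defs.
From HB Require Import structures.
From mathcomp Require Import all_boot all_order all_algebra.
From mathcomp Require Import ring lra.
Set Implicit Arguments. Unset Strict Implicit. Unset Printing Implicit Defensive.
Import Order.TTheory GRing.Theory Num.Theory.
Local Open Scope ring_scope.

Section Branch.
Variable C : numClosedFieldType.

Definition Hp (w : C) : bool := (0 < 'Re w) || (('Re w == 0) && (0 <= 'Im w)).
Definition rt (z : C) : C := if Hp (sqrtC z) then sqrtC z else - sqrtC z.

Lemma rtK z : rt z ^+ 2 = z.
Proof. by rewrite /rt; case: ifP; rewrite ?sqrrN sqrtCK. Qed.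

Lemma Hp_rt z : Hp (rt z).
Proof.
rewrite /rt; case: ifP => // /negbT; rewrite /Hp !negb_or !negb_and.
rewrite !raddfN /= oppr_gt0 oppr_eq0 oppr_ge0.
have := Creal_Re (sqrtC z); have := Creal_Im (sqrtC z).
move=> rI rR /andP[h1 h2].
have h3 : 'Re (sqrtC z) <= 0 by rewrite real_leNgt ?real0.
have [e0|e0] := eqVneq ('Re (sqrtC z)) 0.
  move: h2; rewrite e0 eqxx /= -real_ltNge ?real0 // => h.
  by rewrite ltxx ltW.
by rewrite lt_neqAle e0 h3.
Qed.

Lemma Hp_scale w t : Hp w -> 0 < t -> Hp (w * t).
Proof.
move=> hw ht; have rt0 : t \is Num.real by apply: gtr0_real.
rewrite /Hp (ReMr rt0) (ImMr rt0) (pmulr_lgt0 _ ht) mulf_eq0 (gt_eqF ht) orbF.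
by rewrite (pmulr_lge0 _ ht).
Qed.

Lemma Hp_uniq a b : Hp a -> Hp b -> a ^+ 2 = b ^+ 2 -> a = b.
Proof.
move=> ha hb /eqP; rewrite -subr_eq0 subr_sqr mulf_eq0 subr_eq0 => /orP[/eqP//|].
rewrite addr_eq0 => /eqP eab; have eb : b = - a by rewrite eab opprK.
move: hb; rewrite eb /Hp !raddfN /= oppr_gt0 oppr_eq0 oppr_ge0.
move: ha; rewrite /Hp => /orP[h|/andP[/eqP h1 h2]].
  by rewrite (lt_gtF h) /= (gt_eqF h).
rewrite h1 ltxx eqxx /= => h3.
have : 'Im a = 0 by apply/eqP; rewrite eq_le h2 h3.
by move=> h4; rewrite [a]Crect h1 h4 mulr0 addr0 oppr0 in eb *.
Qed.

Lemma rt_sym (z : C) : z != 0 -> (rt ((z^*)^-1))^* * rt z = 1.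
Proof.
move=> z0; have r0 : rt z != 0 by apply: contraNneq z0 => h; rewrite -(rtK z) h expr0n.
suff -> : rt ((z^*)^-1) = ((rt z)^*)^-1.
  by rewrite fmorphV /= conjCK mulVf.
apply: Hp_uniq; first exact: Hp_rt.
  have -> : ((rt z)^*)^-1 = rt z * (rt z * (rt z)^*)^-1.
    by rewrite invfM mulrA divff // mul1r.
  by apply: Hp_scale; [exact: Hp_rt|rewrite invr_gt0 mul_conjC_gt0].
by rewrite rtK exprVn -rmorphXn rtK.
Qed.
End Branch.
Section PolyMx.
Variables (C : numClosedFieldType) (m : nat) (U : 'M[C]_m.+1).
Local Notation hU := (horner_mx U).
Local Notation chi := (char_poly U).

Lemma eigen_horner (v : 'rV_m.+1) a p : v *m U = a *: v -> v *m hU p = p.[a] *: v.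
Proof.
move=> hv; elim/poly_ind: p => [|p c IH].
  by rewrite rmorph0 mulmx0 horner0 scale0r.
rewrite rmorphD rmorphM /= horner_mx_X horner_mx_C -mulmxE mulmxDr mulmxA IH.
by rewrite -scalemxAl hv scalerA mul_mx_scalar hornerMXaddC scalerDl.
Qed.

Lemma root_eig (v : 'rV_m.+1) a : v *m U = a *: v -> v != 0 -> root chi a.
Proof. by move=> hv v0; rewrite -eigenvalue_root_char; apply/eigenvalueP; exists v. Qed.

Lemma eig_root a : root chi a -> exists2 v : 'rV_m.+1, v *m U = a *: v & v != 0.
Proof. by rewrite -eigenvalue_root_char => /eigenvalueP. Qed.

Lemma inv_poly q : (forall a, root chi a -> q.[a] != 0) ->
  exists u, hU u * hU q = 1 /\ (forall a, root chi a -> u.[a] * q.[a] = 1).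
Proof.
move=> hq.
have cop : coprimep q chi.
  rewrite /coprimep; apply/negPn/negP => /closed_rootP [x].
  rewrite root_gcd => /andP[r1 r2]; by move: (hq x r2); rewrite -/(root q x) r1.
case/Bezout_eq1_coprimepP: cop => [[u v]] /= e.
exists u; split.
  have := congr1 hU e; rewrite rmorphD !rmorphM /= Cayley_Hamilton mulr0 addr0.
  by rewrite rmorph1.
move=> a ra; have := congr1 (fun p => p.[a]) e; rewrite /= hornerD !hornerM.
by rewrite (rootP ra) mulr0 addr0 hornerC.
Qed.

Lemma prod_dvd (d : {poly C}) (s : seq C) : (forall z, z \in s -> root d z) ->
  \prod_(z <- s) ('X - z%:P) %| d ^+ size s.
Proof.
elim: s => [|a s IH] h; first by rewrite big_nil dvd1p.
rewrite big_cons /= exprS dvdp_mul //.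
  by rewrite -root_factor_theorem; apply: h; rewrite mem_head.
by apply: IH => z zs; apply: h; rewrite inE zs orbT.
Qed.

Lemma nilp d : (forall a, root chi a -> d.[a] = 0) -> exists N, hU d ^+ N = 0.
Proof.
move=> hd; have [rs e] := closed_field_poly_normal chi.
have lc : lead_coef chi = 1 by apply/monicP; apply: char_poly_monic.
rewrite lc scale1r in e.
exists (size rs).
have : chi %| d ^+ size rs.
  rewrite e; apply: prod_dvd => z zs; apply/rootP; apply: hd.
  by rewrite e root_prod_XsubC.
case/dvdpP => qq eq; by rewrite -rmorphXn /= eq rmorphM /= Cayley_Hamilton mulr0.
Qed.

Lemma interp (s : seq C) (g : C -> C) : exists p : {poly C}, forall x, x \in s -> p.[x] = g x.
Proof.
elim: s => [|a s [p IH]]; first by exists 0.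
case: (boolP (a \in s)) => as_.
  by exists p => x; rewrite inE => /orP[/eqP->|]; [apply: IH|apply: IH].
set P := \prod_(b <- s) ('X - b%:P).
have Pa : P.[a] != 0 by rewrite -/(root P a) /P root_prod_XsubC.
exists (p + ((g a - p.[a]) / P.[a]) *: P) => x; rewrite inE => /orP[/eqP->|xs].
  by rewrite hornerD hornerZ mulfVK // addrC subrK.
have : root P x by rewrite /P root_prod_XsubC.
by move/rootP; rewrite hornerD hornerZ => ->; rewrite mulr0 addr0 IH.
Qed.


Hypothesis Uu : U \in unitmx.

Definition Inv (p : {poly C}) := forall a, root chi a -> p.[a] = rt a.

Lemma root_nz a : root chi a -> a != 0.
Proof.
move=> /eig_root [v hv v0]; apply: contraNneq v0 => a0.
have : v *m U *m invmx U = 0 by rewrite hv a0 scale0r mul0mx.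
by rewrite mulmxK // => ->.
Qed.

Lemma rt_nz (a : C) : a != 0 -> rt a != 0.
Proof. by move=> a0; apply: contraNneq a0 => h; rewrite -(rtK a) h expr0n. Qed.

Lemma newton_step p : Inv p -> exists p', Inv p' /\
  exists w, hU (p' ^+ 2 - 'X) = hU ((p ^+ 2 - 'X) ^+ 2 * w).
Proof.
move=> hp.
have [u [hu1 hu2]] : exists u, hU u * hU p = 1 /\ (forall a, root chi a -> u.[a] * p.[a] = 1).
  by apply: inv_poly => a ra; rewrite hp // rt_nz // root_nz.
have n2 : (2%:R : C) != 0 by rewrite pnatr_eq0.
set c : C := 2%:R^-1.
exists (c%:P * (p + 'X * u)); split.
  move=> a ra; rewrite hornerM hornerC hornerD hornerM hornerX.
  have := hu2 a ra; rewrite hp // => e.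
  have r0 : rt a != 0 by rewrite rt_nz // root_nz.
  have eu : u.[a] = (rt a)^-1 by rewrite -[u.[a]]mulr1 -(mulfV r0) mulrA e mul1r.
  rewrite eu -{2}(rtK a) expr2 mulrK ?unitfE // /c.
  by field.
set t := p * u.
have hc : (c%:P) ^+ 2 * 4%:R = 1 :> {poly C}.
  rewrite -polyC_natr -rmorphXn -polyCM.
  have -> : c ^+ 2 * 4%:R = 1 by rewrite /c; field.
  by [].
have e1 : (c%:P * (p + 'X * u)) ^+ 2 - 'X =
   (p ^+ 2 - 'X) ^+ 2 * ((c%:P) ^+ 2 * u ^+ 2) +
   (1 - t) * ((c%:P) ^+ 2 * (p ^+ 2 * (1 + t) - 2%:R * 'X * (t + 2%:R)))
   + ((c%:P) ^+ 2 * 4%:R - 1) * 'X.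
  rewrite /t; ring.
have ht : hU (1 - t) = 0.
  by rewrite rmorphB rmorph1 /t mulrC rmorphM /= hu1 subrr.
exists ((c%:P) ^+ 2 * u ^+ 2).
by rewrite e1 hc subrr mul0r addr0 rmorphD [X in _ + X]rmorphM /= ht mul0r addr0.
Qed.

Lemma sqrt_exists : exists p, hU p ^+ 2 = U /\ Inv p.
Proof.
have [rs e] := closed_field_poly_normal chi.
have lc : lead_coef chi = 1 by apply/monicP; apply: char_poly_monic.
rewrite lc scale1r in e.
have [p0 hp0] := interp rs (@rt C).
have Ip0 : Inv p0 by move=> a ra; apply: hp0; rewrite -root_prod_XsubC -e.
set d0 := p0 ^+ 2 - 'X.
have iter : forall k, exists p, Inv p /\ exists z, hU (p ^+ 2 - 'X) = hU (d0 ^+ (2 ^ k) * z).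
  elim=> [|k [p [Ip [z hz]]]]; first by exists p0; split=> //; exists 1; rewrite expn0 expr1 mulr1.
  have [p' [Ip' [w hw]]] := newton_step Ip.
  exists p'; split=> //; exists (z ^+ 2 * w).
  rewrite hw rmorphM rmorphXn /= hz -rmorphXn -rmorphM /=.
  by congr (hU _); rewrite expnSr exprM; ring.
have [N hN] : exists N, hU d0 ^+ N = 0.
  by apply: nilp => a ra; rewrite /d0 hornerD hornerN hornerX horner_exp Ip0 // rtK subrr.
have [p [Ip [z hz]]] := iter N.
exists p; split=> //.
have : hU (p ^+ 2 - 'X) = 0.
  rewrite hz rmorphM rmorphXn /=.
  have le : (N <= 2 ^ N)%N by apply: ltnW; apply: ltn_expl.
  by rewrite -(subnK le) exprD hN mulr0 mul0r.
by rewrite rmorphB rmorphXn /= horner_mx_X => /eqP; rewrite subr_eq0 => /eqP.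
Qed.

End PolyMx.

Section Main.
Variables (C : numClosedFieldType) (m : nat).
Local Notation W := 'rV[C]_m.+1.
Definition cj k1 k2 (X : 'M[C]_(k1, k2)) := map_mx (@Num.conj C) X.

Lemma cjK k1 k2 (X : 'M[C]_(k1, k2)) : cj (cj X) = X.
Proof. by apply/matrixP => i j; rewrite !mxE conjCK. Qed.
Lemma cjM k1 k2 k3 (X : 'M[C]_(k1, k2)) (Y : 'M[C]_(k2, k3)) : cj (X *m Y) = cj X *m cj Y.
Proof. exact: map_mxM. Qed.
Lemma cjV (X : 'M[C]_m.+1) : cj (invmx X) = invmx (cj X).
Proof. exact: map_invmx. Qed.
Lemma cjD k1 k2 (X Y : 'M[C]_(k1, k2)) : cj (X + Y) = cj X + cj Y.
Proof. exact: map_mxD. Qed.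
Lemma cjZ k1 k2 a (X : 'M[C]_(k1, k2)) : cj (a *: X) = a^* *: cj X.
Proof. by apply/matrixP => i j; rewrite !mxE rmorphM. Qed.
Lemma cj_scalar a : cj (a%:M : 'M[C]_m.+1) = (a^*)%:M.
Proof. exact: map_scalar_mx. Qed.
Lemma cj_unit (X : 'M[C]_m.+1) : (cj X \in unitmx) = (X \in unitmx).
Proof. exact: map_unitmx. Qed.
Lemma cj0 k1 k2 : cj (0 : 'M[C]_(k1, k2)) = 0.
Proof. exact: map_mx0. Qed.

Variable l : W -> W -> C.
Hypothesis hl : sesq_hermitian l.
Variables M Mt : 'M[C]_m.+1.
Hypothesis Mu : M \in unitmx.
Hypothesis hB : cj Mt *m Mt = cj M *m M.
Hypothesis hsa : forall v w, l (cj v *m M) w = l (cj w *m M) v.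
Hypothesis hsat : forall v w, l (cj v *m Mt) w = l (cj w *m Mt) v.

Lemma l_add u v w : l (u + v) w = l u w + l v w.
Proof. by have := (hl.1 1 u v w); rewrite scale1r mul1r. Qed.
Lemma l_0 w : l 0 w = 0.
Proof. by have := l_add 0 0 w; rewrite addr0 => h; apply: (addrI (l 0 w)); rewrite addr0 -h. Qed.
Lemma l_scale a u w : l (a *: u) w = a * l u w.
Proof. by have := hl.1 a u 0 w; rewrite addr0 l_0 addr0. Qed.
Lemma l_2nd u a v w : l u (a *: v + w) = a^* * l u v + l u w.
Proof. by rewrite hl.2 hl.1 rmorphD rmorphM /= -!hl.2. Qed.

Definition U := invmx M *m Mt.
Definition tau (X : 'M[C]_m.+1) := invmx M *m cj X *m M.
Local Notation hU := (horner_mx U).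

Lemma MtE : Mt = M *m U.
Proof. by rewrite /U mulmxA mulmxV // mul1mx. Qed.

Lemma tauM X Y : tau (X *m Y) = tau X *m tau Y.
Proof. by rewrite /tau cjM !mulmxA mulmxK. Qed.
Lemma tauD X Y : tau (X + Y) = tau X + tau Y.
Proof. by rewrite /tau cjD mulmxDr mulmxDl. Qed.
Lemma tau_scalar a : tau a%:M = (a^*)%:M.
Proof. by rewrite /tau cj_scalar mul_mx_scalar -scalemxAl mulVmx // scalemx1. Qed.

Lemma tauU : tau U *m U = 1%:M.
Proof.
have cu : cj M \in unitmx by rewrite cj_unit.
rewrite /tau /U cjM cjV !mulmxA mulmxK // -(mulmxA _ (cj Mt) Mt) hB mulmxA.
by rewrite mulmxKV // mulVmx.
Qed.
Lemma UtauU : U *m tau U = 1%:M.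
Proof. exact: mulmx1C tauU. Qed.
Lemma Uu : U \in unitmx.
Proof. by case: (mulmx1_unit tauU). Qed.

Lemma hU_comm p q : hU p *m hU q = hU q *m hU p.
Proof. by rewrite !mulmxE -!rmorphM /= mulrC. Qed.

Lemma Uinv_poly : exists u, hU u = tau U.
Proof.
have [u [hu _]] := inv_poly (q := 'X) (U := U) (fun a ra => ltac:(rewrite hornerX; exact: (root_nz Uu ra))).
exists u; rewrite horner_mx_X in hu.
have : hU u *m U *m tau U = tau U by rewrite mulmxE hu mul1r.
by rewrite -mulmxA UtauU mulmx1.
Qed.

Lemma tau_poly p : exists q, tau (hU p) = hU q.
Proof.
have [u hu] := Uinv_poly.
elim/poly_ind: p => [|p c [q hq]].
  by exists 0; rewrite !rmorph0 /tau cj0 mulmx0 mul0mx.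
exists (q * u + (c^*)%:P).
rewrite !rmorphD !rmorphM /= !horner_mx_C horner_mx_X -!mulmxE tauD tauM hq hu.
by rewrite tau_scalar.
Qed.

Lemma U_iso x y : l (x *m U) (y *m U) = l x y.
Proof.
pose v := cj (x *m invmx M); pose w := cj (y *m invmx M).
have ex : x = cj v *m M by rewrite /v cjK mulmxKV.
have ey : y = cj w *m M by rewrite /w cjK mulmxKV.
rewrite ex ey -!mulmxA -!MtE hsat cjM cjK -mulmxA hB mulmxA.
by rewrite -[w *m cj M](cjK) cjM cjK hsa.
Qed.

Lemma adj p x y : l (x *m hU p) y = l x (y *m tau (hU p)).
Proof.
elim/poly_ind: p x y => [|p c IH] x y.
  rewrite rmorph0 mulmx0 l_0 /tau cj0 mulmx0 mul0mx mulmx0.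
  by rewrite hl.2 l_0 conjC0.
rewrite rmorphD rmorphM /= horner_mx_C horner_mx_X -mulmxE tauD tauM tau_scalar.
rewrite !mulmxDr !mul_mx_scalar l_add l_scale mulmxA.
have -> : l (x *m hU p *m U) y = l (x *m hU p) (y *m tau U).
  by rewrite -[in RHS]U_iso -(mulmxA y) tauU mulmx1.
rewrite IH -mulmxA.
have -> : tau U *m tau (hU p) = tau (hU p) *m tau U.
  by have h := hU_comm 'X p; rewrite horner_mx_X in h; rewrite -!tauM h.
by rewrite [in RHS]addrC l_2nd conjCK addrC.
Qed.

Lemma eig_conj (w : W) a : w *m U = a *: w -> w != 0 ->
  cj (w *m invmx M) *m U = (a^*)^-1 *: cj (w *m invmx M) /\ cj (w *m invmx M) != 0.
Proof.
move=> hw w0.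
have a0 : a != 0 by apply: (root_nz Uu); apply: (root_eig hw w0).
have h1 : w *m tau U = a^-1 *: w.
  have : w *m U *m tau U = w by rewrite -mulmxA UtauU mulmx1.
  rewrite hw -scalemxAl => e; by rewrite -[in RHS]e scalerA mulVf // scale1r.
have h2 : w *m invmx M *m cj U = a^-1 *: (w *m invmx M).
  have := congr1 (fun z => z *m invmx M) h1; rewrite /tau /= !mulmxA mulmxK //.
  by rewrite -scalemxAl.
split.
  have := congr1 (@cj _ _) h2; rewrite cjM cjK cjZ => ->.
  by rewrite fmorphV.
apply: contraNneq w0 => h.
have : cj (cj (w *m invmx M)) = 0 by rewrite h cj0.
by rewrite cjK => /(congr1 (fun z => z *m M)); rewrite mulmxKV // mul0mx => ->.
Qed.

Lemma main_mx : exists V, V \in unitmx /\ (forall x y, l (x *m V) (y *m V) = l x y)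
  /\ M *m V = cj V *m Mt.
Proof.
have [p [hp Ip]] := sqrt_exists Uu.
set V0 := hU p.
have hV2 : V0 *m V0 = U by rewrite mulmxE -expr2.
have [q hq] := tau_poly p.
set E := tau V0 *m V0.
have EE : hU (q * p) = E by rewrite rmorphM /= -hq -mulmxE.
have Eval : forall a, root (char_poly U) a -> (q * p).[a] = 1.
  move=> a ra; have [w hw w0] := eig_root ra.
  have [hu u0] := eig_conj hw w0.
  set b := (a^*)^-1 in hu.
  have rb : root (char_poly U) b by apply: (root_eig hu u0).
  have h1 : w *m V0 = rt a *: w by rewrite (eigen_horner p hw) Ip.
  have h2 : cj (w *m invmx M) *m V0 = rt b *: cj (w *m invmx M).
    by rewrite (eigen_horner p hu) Ip.
  have h3 : w *m tau V0 = (rt b)^* *: w.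
    have := congr1 (@cj _ _) h2; rewrite cjM cjZ !cjK => e.
    by rewrite /tau !mulmxA e -scalemxAl mulmxKV.
  have h4 : w *m E = w.
    rewrite /E mulmxA h3 -scalemxAl h1 scalerA.
    have a0 : a != 0 by apply: (root_nz Uu).
    by rewrite /b rt_sym // scale1r.
  have := eigen_horner (q * p) hw; rewrite EE h4 => /eqP.
  rewrite -subr_eq0 -{1}(scale1r w) -scalerBl scaler_eq0 (negbTE w0) orbF subr_eq0.
  by move/eqP.
have [u [hu _]] : exists u, hU u * hU (q * p + 1) = 1 /\
    (forall a, root (char_poly U) a -> u.[a] * (q * p + 1).[a] = 1).
  apply: inv_poly => a ra; rewrite hornerD Eval // hornerC.
  by rewrite -(natrD _ 1 1) pnatr_eq0.
have E2 : E *m E = 1%:M.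
  have c1 : V0 *m tau V0 = tau V0 *m V0 by rewrite /V0 hq hU_comm.
  by rewrite /E mulmxA -(mulmxA (tau V0)) c1 mulmxA -tauM hV2 -mulmxA hV2 tauU.
have E1 : E = 1%:M.
  have : hU u * hU (q * p + 1) * (E - 1) = 0.
    rewrite -mulrA rmorphD rmorph1 /= EE mulrDl mulrBr mul1r mulr1 -mulmxE E2.
    by rewrite addrA subrK subrr mulmx0.
  by rewrite hu mul1r => /eqP; rewrite subr_eq0 => /eqP.
have tV : tau V0 *m V0 = 1%:M by [].
have Vt : V0 *m tau V0 = 1%:M by apply: mulmx1C.
exists V0; split; first by case: (mulmx1_unit tV).
split.
  by move=> x y; rewrite adj -mulmxA Vt mulmx1.
have : cj V0 *m M *m V0 = M.
  by move: tV; rewrite /tau -!mulmxA => /(congr1 (mulmx M)); rewrite !mulmxA mulmxV // mul1mx mulmx1.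
move=> e; by rewrite MtE mulmxA -hV2 mulmxA e.
Qed.

End Main.

Section Assembly.
Variables (C : numClosedFieldType) (m : nat).
Local Notation W := 'rV[C]_m.+1.

Lemma antilin_mx (A : W -> W) : is_antilinear A ->
  exists MA : 'M[C]_m.+1, forall v, A v = cj v *m MA.
Proof.
move=> hA.
have A0 : A 0 = 0.
  have := hA 1 0 0; rewrite scale1r addr0 rmorph1 scale1r => h.
  by apply: (addrI (A 0)); rewrite addr0 -h.
have Aadd : forall v w, A (v + w) = A v + A w.
  by move=> v w; have := hA 1 v w; rewrite scale1r rmorph1 scale1r.
have Asc : forall z v, A (z *: v) = z^* *: A v.
  by move=> z v; have := hA z v 0; rewrite !addr0 A0 addr0.
exists (\matrix_(i < m.+1) A (delta_mx 0 i)) => v.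
rewrite [in LHS](row_sum_delta v) (big_morph A Aadd A0) mulmx_sum_row.
apply: eq_bigr => i _; rewrite Asc /cj mxE rowK.
by [].
Qed.

Lemma mx_eq_rows k (X Y : 'M[C]_(k, m.+1)) : (forall v : 'rV_k, v *m X = v *m Y) -> X = Y.
Proof. by move=> h; apply/row_matrixP => i; rewrite !rowE h. Qed.

End Assembly.

Unset Implicit Arguments.
Set Strict Implicit.

Theorem mainTheorem2 (C : numClosedFieldType) (n : nat)
    (l l' : 'rV[C]_n -> 'rV[C]_n -> C) (A A' : 'rV[C]_n -> 'rV[C]_n) :
  sesq_hermitian l -> sesq_nondegenerate l ->
  sesq_hermitian l' -> sesq_nondegenerate l' ->
  is_antilinear A -> op_nonsingular A -> l_self_adjoint l A ->
  is_antilinear A' -> op_nonsingular A' -> l_self_adjoint l' A' ->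
  pair_equiv l (A \o A) l' (A' \o A') ->
  pair_equiv l A l' A'.
Proof.
move=> hl _ hl' _ hA nA sA hA' nA' sA' [P [Pu [Piso PB]]].
case: n l l' A A' hl hl' hA nA sA hA' nA' sA' P Pu Piso PB =>
  [|m] l l' A A' hl hl' hA nA sA hA' nA' sA' P Pu Piso PB.
  exists P; split=> //; split=> // v.
  by apply/matrixP => i [].
have [M hM] := antilin_mx hA.
have [M' hM'] := antilin_mx hA'.
have Mu : M \in unitmx.
  rewrite -row_free_unit; apply: inj_row_free => x hx.
  have : A (cj x) = 0 by rewrite hM cjK.
  by move/nA => /(congr1 (@cj _ _ _)); rewrite cjK cj0.
set Mt := cj P *m M' *m invmx P.
have hPB : cj M *m M *m P = P *m cj M' *m M'.
  apply: mx_eq_rows => v; have := PB v; rewrite /= hM hM' hM hM' !cjM !cjK.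
  by rewrite !mulmxA.
have cPu : cj P \in unitmx by rewrite cj_unit.
have hB : cj Mt *m Mt = cj M *m M.
  rewrite /Mt !cjM cjV cjK !mulmxA mulmxKV // -hPB.
  by rewrite mulmxK.
have hsa : forall v w, l (cj v *m M) w = l (cj w *m M) v.
  by move=> v w; rewrite -!hM sA.
have eMt : forall v, cj v *m Mt *m P = A' (v *m P).
  by move=> v; rewrite /Mt !mulmxA mulmxKV // hM' cjM.
have hsat : forall v w, l (cj v *m Mt) w = l (cj w *m Mt) v.
  by move=> v w; rewrite -Piso eMt sA' -eMt Piso.
have [V [Vu [Viso VM]]] := main_mx hl Mu hB hsa hsat.
exists (V *m P); split; first by rewrite unitmx_mul Vu Pu.
split; first by move=> v w; rewrite !mulmxA Piso Viso.
move=> v; rewrite hM mulmxA -(mulmxA _ M) VM mulmxA -cjM eMt.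
by rewrite mulmxA.
Qed.
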